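(* Let $\Gamma_3^*\subseteq\mathbb{R}^7$ be the set of entropy vectors of triples of discrete random variables. Let $\mathbf{e}_1=[1,0,0,1,1,0,1]^\intercal$, $\mathbf{e}_2=[0,1,0,1,0,1,1]^\intercal$, $\mathbf{e}_3=[0,0,1,0,1,1,1]^\intercal$, $\mathbf{e}_{12}=[1,1,0,1,1,1,1]^\intercal$, $\mathbf{e}_{123'}=[1,1,1,2,2,2,2]^\intercal$, and let $\Omega=\mathrm{cone}(\mathbf{e}_1,\mathbf{e}_2,\mathbf{e}_3,\mathbf{e}_{12},\mathbf{e}_{123'})$ be the set of all nonnegative combinations of these vectors. Let $\Omega^{\mathrm{in}}$ be the set of all vectors $\lambda_1\mathbf{e}_1+\lambda_2\mathbf{e}_2+\lambda_3\mathbf{e}_3+\lambda_{12}\mathbf{e}_{12}+\lambda_{123'}\mathbf{e}_{123'}$ with all $\lambda_j\ge 0$ such that at least one of the following holds: (i) $\lambda_{12}+\lambda_{123'}\ge\log\lceil 2^{\lambda_{123'}}\rceil$; (ii) $\lambda_{123'}=\log m$ for some $m\in\mathbb{N}$. Then there exists an entropy vector $\mathbf{h}\in\Gamma_3^*$ lying in the relative interior of $\Omega$ (i.e., in $\Omega$ but in no proper face of $\Omega$) such that $\mathbf{h}\notin\Omega^{\mathrm{in}}$.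
   Context: All logarithms are base 2 and entropies are in bits. For a discrete random vector $(X_1,X_2,X_3)$, its entropy vector is $\mathbf{h}=[h_1,h_2,h_3,h_{12},h_{13},h_{23},h_{123}]^\intercal\in\mathbb{R}^7$, where $h_\alpha$ is the Shannon entropy of $(X_i)_{i\in\alpha}$. $\Omega$ is a face of the polymatroid cone $\Gamma_3$ (the set of $\mathbf{h}$ satisfying the Shannon elemental inequalities). *)

(* Defs.v *)
From HB Require Import structures.
From mathcomp Require Import all_boot all_order all_algebra.
From mathcomp Require Import all_classical all_reals all_analysis.
Set Implicit Arguments. Unset Strict Implicit. Unset Printing Implicit Defensive.
Import Order.TTheory GRing.Theory Num.Theory.
Local Open Scope ring_scope.

Section Entropy.
Variable R : realType.

Definition log2 (x : R) : R := ln x / ln 2.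

Definition xlog2x (x : R) : R := if x == 0 then 0 else x * log2 x.

(* Shannon entropy (bits) of f(X) where X ~ p on a finite type T *)
Definition entropy_of (T U : finType) (p : {ffun T -> R}) (f : T -> U) : R :=
  - \sum_(u : U) xlog2x (\sum_(t : T | f t == u) p t).

Definition is_pmf (T : finType) (p : {ffun T -> R}) : Prop :=
  (forall t, 0 <= p t) /\ \sum_(t : T) p t = 1.

Definition vec7 (a b c d e f g : R) : 'rV[R]_7 :=
  \row_(i < 7) [:: a; b; c; d; e; f; g]`_i.

(* entropy vector [h1,h2,h3,h12,h13,h23,h123] of (X1,X2,X3) with joint pmf p *)
Definition entvec (T1 T2 T3 : finType) (p : {ffun (T1 * T2 * T3)%type -> R})
  : 'rV[R]_7 :=
  vec7 (entropy_of p (fun t => t.1.1))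
       (entropy_of p (fun t => t.1.2))
       (entropy_of p (fun t => t.2))
       (entropy_of p (fun t => (t.1.1, t.1.2)))
       (entropy_of p (fun t => (t.1.1, t.2)))
       (entropy_of p (fun t => (t.1.2, t.2)))
       (entropy_of p (fun t => t)).

(* Gamma_3^* : entropy vectors of triples of (finitely supported) discrete r.v.s *)
Definition entropic (h : 'rV[R]_7) : Prop :=
  exists (T1 T2 T3 : finType) (p : {ffun (T1 * T2 * T3)%type -> R}),
    is_pmf p /\ h = entvec p.

Definition e1 : 'rV[R]_7 := vec7 1 0 0 1 1 0 1.
Definition e2 : 'rV[R]_7 := vec7 0 1 0 1 0 1 1.
Definition e3 : 'rV[R]_7 := vec7 0 0 1 0 1 1 1.
Definition e12 : 'rV[R]_7 := vec7 1 1 0 1 1 1 1.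
Definition e123' : 'rV[R]_7 := vec7 1 1 1 2 2 2 2.

Definition comb (l1 l2 l3 l12 l123 : R) : 'rV[R]_7 :=
  l1 *: e1 + l2 *: e2 + l3 *: e3 + l12 *: e12 + l123 *: e123'.

Definition in_Omega (h : 'rV[R]_7) : Prop :=
  exists l1 l2 l3 l12 l123 : R,
    [/\ 0 <= l1, 0 <= l2, 0 <= l3, 0 <= l12 & 0 <= l123] /\
    h = comb l1 l2 l3 l12 l123.

Definition dot7 (a x : 'rV[R]_7) : R := \sum_(i < 7) a 0 i * x 0 i.

(* Faces of the polyhedral cone Omega are the sets
   Omega ∩ {x | a.x = 0} for a supporting functional a (a.x >= 0 on Omega).
   h is in the relative interior iff h is in Omega and every face containing h
   is all of Omega (i.e. h lies in no proper face). *)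
Definition in_relint_Omega (h : 'rV[R]_7) : Prop :=
  in_Omega h /\
  forall a : 'rV[R]_7,
    (forall x, in_Omega x -> 0 <= dot7 a x) ->
    dot7 a h = 0 ->
    forall x, in_Omega x -> dot7 a x = 0.

Definition in_Omega_in (h : 'rV[R]_7) : Prop :=
  exists l1 l2 l3 l12 l123 : R,
    [/\ 0 <= l1, 0 <= l2, 0 <= l3, 0 <= l12 & 0 <= l123] /\
    h = comb l1 l2 l3 l12 l123 /\
    (log2 (Num.ceil (2 `^ l123))%:~R <= l12 + l123
     \/ exists m : nat, l123 = log2 m%:R).

End Entropy.

(* Main.v *)
Require Import Defs.
From HB Require Import structures.
From mathcomp Require Import all_boot all_order all_algebra.
From mathcomp Require Import all_classical all_reals all_analysis.
From mathcomp Require Import ring lra zify.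
Set Implicit Arguments. Unset Strict Implicit. Unset Printing Implicit Defensive.
Import Order.TTheory GRing.Theory Num.Theory.
Local Open Scope ring_scope.

Definition good (A : finType) (s : seq A) :=
  forall (R : Type) (idx : R) (op : Monoid.com_law idx) (F : A -> R),
  \big[op/idx]_(a : A) F a = \big[op/idx]_(a <- s) F a.

Lemma good_bool : good [:: true; false].
Proof. by move=> R idx op F; rewrite big_bool !big_cons big_nil Monoid.mulm1. Qed.

Lemma good_pair (A B : finType) (sA : seq A) (sB : seq B) :
  good sA -> good sB -> good [seq (a, b) | a <- sA, b <- sB].
Proof.
move=> hA hB R idx op F.
rewrite big_allpairs.
transitivity (\big[op/idx]_(a : A) \big[op/idx]_(b : B) F (a, b)).
  by rewrite (pair_bigA op (fun a b => F (a, b))); apply: eq_bigr; case.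
rewrite hA.
by apply: eq_bigr => a _; rewrite hB.
Qed.

Lemma sum_filter_nat (A : finType) (s : seq A) (P : pred A) (F : A -> nat) :
  good s -> (\sum_(a | P a) F a)%N = sumn [seq F a | a <- s & P a].
Proof.
move=> hs; rewrite big_mkcond (hs _ _ addn) -big_mkcond.
by rewrite sumnE big_map big_filter.
Qed.

Section Ent.
Variable R : realType.

Lemma entropy_comp (T U : finType) (sT : seq T) (sU : seq U) (q : T -> nat)
   (N : nat) (f : T -> U) :
  good sT -> good sU ->
  entropy_of ([ffun t => (q t)%:R / N%:R] : {ffun T -> R}) f =
  - \sum_(k <- [seq sumn [seq q t | t <- sT & f t == u] | u <- sU])
      xlog2x (k%:R / (N%:R : R)).
Proof.
move=> hT hU; rewrite /entropy_of big_map (hU _ _ +%R); congr (- _).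
apply: eq_bigr => u _; congr xlog2x.
rewrite -(sum_filter_nat _ _ hT) natr_sum mulr_suml.
by apply: eq_bigr => t _; rewrite ffunE.
Qed.

Lemma sum_tally (G : nat -> R) (s : seq nat) (l : seq (nat * nat)) :
  perm_eq s (flatten [seq nseq kc.2 kc.1 | kc <- l]) ->
  \sum_(k <- s) G k = \sum_(kc <- l) kc.2%:R * G kc.1.
Proof.
move=> hp; rewrite (perm_big _ hp) big_flatten big_map; apply: eq_bigr => kc _.
by rewrite big_nseq iter_addr_0 mulr_natl.
Qed.

Definition cc : R := ln 3 / ln 2.

Lemma ln2_gt0 : 0 < ln (2 : R).
Proof. by apply: ln_gt0; rewrite ltr1n. Qed.

Lemma ln_23 (a b : nat) : ln ((2 ^ a * 3 ^ b)%N%:R : R) = a%:R * ln 2 + b%:R * ln 3.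
Proof.
rewrite natrM !natrX.
have h2 : (0:R) < 2 ^+ a by rewrite exprn_gt0 // ltr0n.
have h3 : (0:R) < 3 ^+ b by rewrite exprn_gt0 // ltr0n.
rewrite lnM ?posrE // !lnXn ?ltr0n //.
by rewrite !mulr_natl.
Qed.

Lemma xlogE (x : R) : x != 0 -> xlog2x x = x * log2 x.
Proof. by rewrite /xlog2x => /negbTE ->. Qed.

Lemma xlog_23g (k N a b c d : nat) : k = (2 ^ a * 3 ^ b)%N -> N = (2 ^ c * 3 ^ d)%N ->
  xlog2x (k%:R / N%:R : R) = k%:R / N%:R * ((a%:R - c%:R) + (b%:R - d%:R) * cc).
Proof.
move=> hk hN.
have kpos : (0 < k)%N by rewrite hk muln_gt0 !expn_gt0.
have Npos : (0 < N)%N by rewrite hN muln_gt0 !expn_gt0.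
have kR : (0 : R) < k%:R by rewrite ltr0n.
have NR : (0 : R) < N%:R by rewrite ltr0n.
rewrite xlogE; last by rewrite mulf_neq0 // ?invr_eq0 gt_eqF.
congr (_ * _); rewrite /log2 lnM ?posrE ?invr_gt0 // lnV ?posrE //.
rewrite hk hN !ln_23 /cc.
have := ln2_gt0; set l2 := ln 2; set l3 := ln 3 => h2.
by field; rewrite gt_eqF.
Qed.

Lemma xlog_23 (k a b : nat) : k = (2 ^ a * 3 ^ b)%N ->
  xlog2x (k%:R / 768%:R : R) = k%:R / 768%:R * ((a%:R - 8%:R) + (b%:R - 1%:R) * cc).
Proof. by move=> hk; apply: xlog_23g. Qed.

Lemma xlog_0 : xlog2x (0%:R / 768%:R : R) = 0.
Proof. by rewrite /xlog2x mul0r eqxx. Qed.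


Definition T1 := (bool * bool * bool * bool)%type.
Definition sB := [:: true; false].
Definition s1 : seq (bool * bool * bool * bool) :=
  [seq (x, y) | x <- [seq (x, y) | x <- [seq (x, y) | x <- sB, y <- sB], y <- sB], y <- sB].
Definition s2 : seq (bool * bool * bool) :=
  [seq (x, y) | x <- [seq (x, y) | x <- sB, y <- sB], y <- sB].
Definition s3 : seq (bool * bool) := [seq (x, y) | x <- sB, y <- sB].
Definition sT := [seq (x, y) | x <- [seq (x, y) | x <- s1, y <- s2], y <- s3].

Lemma good1 : good s1. Proof. by do 3! (apply: good_pair; last exact: good_bool); exact: good_bool. Qed.
Lemma good2 : good s2. Proof. by do 2! (apply: good_pair; last exact: good_bool); exact: good_bool. Qed.
Lemma good3 : good s3. Proof. by apply: good_pair; apply: good_bool. Qed.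
Lemma goodT : good sT.
Proof. apply: good_pair; [apply: good_pair; [exact: good1|exact: good2]|exact: good3]. Qed.

Definition qf (t : (bool * bool * bool * bool) * (bool * bool * bool) * (bool * bool)) : nat :=
  let: ((s, a1, a2, u), (b1, b2, v), (c1, c2)) := t in
  let w := if u == v then 2%N else 1%N in
  if s then (if (c1 == xorb a1 b1) && (c2 == xorb a2 b2) then (6 * w)%N else 0%N)
  else (if c1 == xorb a1 b1 then w else 0%N).

Definition pp : {ffun ((bool * bool * bool * bool) * (bool * bool * bool) * (bool * bool)) -> R} :=
  [ffun t => (qf t)%:R / 768%:R].

Lemma H1 : entropy_of pp (fun t => t.1.1) = 5 - 3/4 * cc.
Proof.
rewrite (entropy_comp (sT := sT) (sU := s1)); [|exact: goodT|exact: good1].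
rewrite (@sum_tally _ _ [:: (24%N, 8%N); (72%N, 8%N)]); last by vm_compute.
rewrite !big_cons big_nil /=.
rewrite (@xlog_23 24 3 1) // (@xlog_23 72 3 2) //.
lra.
Qed.

Lemma good12 : good [seq (x, y) | x <- s1, y <- s2].
Proof. exact: good_pair good1 good2. Qed.
Lemma good13 : good [seq (x, y) | x <- s1, y <- s3].
Proof. exact: good_pair good1 good3. Qed.
Lemma good23 : good [seq (x, y) | x <- s2, y <- s3].
Proof. exact: good_pair good2 good3. Qed.

Lemma H2 : entropy_of pp (fun t => t.1.2) = 3.
Proof.
rewrite (entropy_comp (sT := sT) (sU := s2)); [|exact: goodT|exact: good2].
rewrite (@sum_tally _ _ [:: (96%N, 8%N)]); last by vm_compute.
rewrite !big_cons big_nil /=.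
rewrite (@xlog_23 96 5 1) //.
lra.
Qed.

Lemma H3 : entropy_of pp (fun t => t.2) = 2.
Proof.
rewrite (entropy_comp (sT := sT) (sU := s3)); [|exact: goodT|exact: good3].
rewrite (@sum_tally _ _ [:: (192%N, 4%N)]); last by vm_compute.
rewrite !big_cons big_nil /=.
rewrite (@xlog_23 192 6 1) //.
lra.
Qed.

Lemma H12 : entropy_of pp (fun t => (t.1.1, t.1.2)) = 19/3 + cc/4.
Proof.
rewrite (entropy_comp (sT := sT) (sU := [seq (x, y) | x <- s1, y <- s2])); [|exact: goodT|exact: good12].
rewrite (@sum_tally _ _ [:: (2%N, 32%N); (4%N, 32%N); (6%N, 32%N); (12%N, 32%N)]); last by vm_compute.
rewrite !big_cons big_nil /=.
rewrite (@xlog_23 2 1 0) // (@xlog_23 4 2 0) // (@xlog_23 6 1 1) // (@xlog_23 12 2 1) //.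
lra.
Qed.

Lemma H13 : entropy_of pp (fun t => (t.1.1, t.2)) = 7 - 3/4 * cc.
Proof.
rewrite (entropy_comp (sT := sT) (sU := [seq (x, y) | x <- s1, y <- s3])); [|exact: goodT|exact: good13].
rewrite (@sum_tally _ _ [:: (6%N, 32%N); (18%N, 32%N)]); last by vm_compute.
rewrite !big_cons big_nil /=.
rewrite (@xlog_23 6 1 1) // (@xlog_23 18 1 2) //.
lra.
Qed.

Lemma H23 : entropy_of pp (fun t => (t.1.2, t.2)) = 5.
Proof.
rewrite (entropy_comp (sT := sT) (sU := [seq (x, y) | x <- s2, y <- s3])); [|exact: goodT|exact: good23].
rewrite (@sum_tally _ _ [:: (24%N, 32%N)]); last by vm_compute.
rewrite !big_cons big_nil /=.
rewrite (@xlog_23 24 3 1) //.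
lra.
Qed.

Lemma H123 : entropy_of pp (fun t => t) = 79/12 + cc/4.
Proof.
rewrite (entropy_comp (sT := sT) (sU := sT)); [|exact: goodT|exact: goodT].
rewrite (@sum_tally _ _ [:: (0%N, 320%N); (1%N, 64%N); (2%N, 64%N); (6%N, 32%N); (12%N, 32%N)]); last by vm_compute.
rewrite !big_cons big_nil /=.
rewrite xlog_0 (@xlog_23 1 0 0) // (@xlog_23 2 1 0) // (@xlog_23 6 1 1) // (@xlog_23 12 2 1) //.
lra.
Qed.


Lemma lt23 (a b c d : nat) : (2 ^ a * 3 ^ b < 2 ^ c * 3 ^ d)%N ->
  a%:R * ln (2 : R) + b%:R * ln 3 < c%:R * ln 2 + d%:R * ln 3.
Proof.
move=> h; rewrite -!ln_23 ltr_ln; first by rewrite ltr_nat.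
all: by rewrite posrE ltr0n muln_gt0 !expn_gt0.
Qed.

Lemma ln3E : ln (3 : R) = cc * ln 2.
Proof. by rewrite /cc divfK // gt_eqF // ln2_gt0. Qed.

Lemma cc_gt : 3/2 < cc.
Proof.
have := @lt23 3 0 0 2 isT; rewrite ln3E => h; have := ln2_gt0 => h2.
move: h; rewrite !mul0r !addr0 add0r => h. nra.
Qed.

Lemma cc_lt : cc < 5/3.
Proof.
have := @lt23 0 3 5 0 isT; rewrite ln3E => h; have := ln2_gt0 => h2.
move: h; rewrite !mul0r !addr0 add0r => h. nra.
Qed.

End Ent.

Section Main.
Variable R : realType.
Local Notation c := (cc R).

Lemma dot7_comb (a : 'rV[R]_7) l1 l2 l3 l12 l123 :
  dot7 a (comb l1 l2 l3 l12 l123) =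
  l1 * dot7 a (e1 R) + l2 * dot7 a (e2 R) + l3 * dot7 a (e3 R) + l12 * dot7 a (e12 R) + l123 * dot7 a (e123' R).
Proof.
rewrite /dot7 /comb /e1 /e2 /e3 /e12 /e123' /vec7 !big_ord_recl !big_ord0 !mxE /=.
ring.
Qed.


Definition hv : 'rV[R]_7 :=
  vec7 (5 - 3/4 * c) 3 2 (19/3 + c/4) (7 - 3/4 * c) 5 (79/12 + c/4).

Lemma hv_comb : hv = comb (19/12 + c/4) (c - 5/12) (1/4) (5/3 - c) (7/4).
Proof.
apply/rowP => i; rewrite /hv /comb /e1 /e2 /e3 /e12 /e123' /vec7 !mxE.
case: i => [[|[|[|[|[|[|[|n]]]]]]] hi] //=; lra.
Qed.

Ltac inO := 
  repeat split; rewrite ?lexx ?ler01 //;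
  apply/rowP => -[[|[|[|[|[|[|[|?]]]]]]] ?];
  rewrite /comb /e1 /e2 /e3 /e12 /e123' /vec7 !mxE //=; lra.

Lemma inO1 : in_Omega (e1 R). Proof. exists 1, 0, 0, 0, 0; inO. Qed.
Lemma inO2 : in_Omega (e2 R). Proof. exists 0, 1, 0, 0, 0; inO. Qed.
Lemma inO3 : in_Omega (e3 R). Proof. exists 0, 0, 1, 0, 0; inO. Qed.
Lemma inO12 : in_Omega (e12 R). Proof. exists 0, 0, 0, 1, 0; inO. Qed.
Lemma inO123 : in_Omega (e123' R). Proof. exists 0, 0, 0, 0, 1; inO. Qed.

Lemma sum5_zero (x1 x2 x3 x4 x5 y1 y2 y3 y4 y5 : R) :
  0 < x1 -> 0 < x2 -> 0 < x3 -> 0 < x4 -> 0 < x5 ->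
  0 <= y1 -> 0 <= y2 -> 0 <= y3 -> 0 <= y4 -> 0 <= y5 ->
  x1 * y1 + x2 * y2 + x3 * y3 + x4 * y4 + x5 * y5 = 0 ->
  [/\ y1 = 0, y2 = 0, y3 = 0, y4 = 0 & y5 = 0].
Proof.
move=> p1 p2 p3 p4 p5 q1 q2 q3 q4 q5 h.
have m1 := mulr_ge0 (ltW p1) q1. have m2 := mulr_ge0 (ltW p2) q2.
have m3 := mulr_ge0 (ltW p3) q3. have m4 := mulr_ge0 (ltW p4) q4.
have m5 := mulr_ge0 (ltW p5) q5.
have z : forall x y : R, 0 < x -> x * y = 0 -> y = 0.
  by move=> x y hx /eqP; rewrite mulf_eq0 (gt_eqF hx) /= => /eqP.
split; [apply: (z x1)|apply: (z x2)|apply: (z x3)|apply: (z x4)|apply: (z x5)] => //; lra.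
Qed.

Lemma relint_hv : in_relint_Omega hv.
Proof.
have g := cc_gt R; have l := cc_lt R.
split.
  exists (19/12 + c/4), (c - 5/12), (1/4), (5/3 - c), (7/4).
  split; last exact: hv_comb.
  split; lra.
move=> a hpos h0 x [m1 [m2 [m3 [m4 [m5 [_ ->]]]]]].
rewrite hv_comb dot7_comb in h0.
have [] := sum5_zero _ _ _ _ _ (hpos _ inO1) (hpos _ inO2) (hpos _ inO3)
  (hpos _ inO12) (hpos _ inO123) h0; try lra.
move=> z1 z2 z3 z4 z5; rewrite dot7_comb z1 z2 z3 z4 z5; lra.
Qed.

Lemma ln4 : ln (4 : R) = 2 * ln 2.
Proof. by have := ln_23 R 2 0; rewrite mul0r addr0. Qed.

Lemma log2_ge2 (x : R) : 4 <= x -> 2 <= log2 x.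
Proof.
move=> hx; have h2 := ln2_gt0 R.
rewrite /log2 ler_pdivlMr // -ln4 ler_ln // posrE; lra.
Qed.

Lemma not_in_hv : ~ in_Omega_in hv.
Proof.
have g := cc_gt R; have l := cc_lt R; have h2 := ln2_gt0 R.
move=> [l1 [l2 [l3 [l12 [l123 [[g1 g2 g3 g4 g5] [E H]]]]]]].
move/rowP: E => E.
have E0 := E (@Ordinal 7 0 isT). have E1 := E (@Ordinal 7 1 isT).
have E2 := E (@Ordinal 7 2 isT). have E3 := E (@Ordinal 7 3 isT).
have E4 := E (@Ordinal 7 4 isT). have E5 := E (@Ordinal 7 5 isT).
have E6 := E (@Ordinal 7 6 isT).
rewrite /hv /comb /e1 /e2 /e3 /e12 /e123' /vec7 !mxE /= in E0 E1 E2 E3 E4 E5 E6.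
have hl123 : l123 = 7/4 by lra.
have hl12 : l12 = 5/3 - c by lra.
case: H => [H|[m H]].
  rewrite hl123 hl12 in H.
  have pw : 3 < 2 `^ (7/4 : R).
    rewrite /powR (_ : (2 : R) == 0 = false); last by apply/negbTE; rewrite pnatr_eq0.
    rewrite -ltr_ln ?posrE ?expR_gt0 // expRK ln3E; nra.
  set z := 2 `^ (7/4 : R) in pw H.
  have hz := ceil_ge z.
  have h3 : (3 : int) < Num.ceil z by rewrite -(ltr_int R); lra.
  have h4 : (4 : int) <= Num.ceil z by lia.
  move: h4; rewrite -(ler_int R) => h4.
  have := log2_ge2 h4; lra.
rewrite hl123 in H.
case: m H => [|[|[|[|m]]]] H.
- by move: H; rewrite /log2 ln0 // mul0r; lra.
- by move: H; rewrite /log2 ln1 mul0r; lra.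
- by move: H; rewrite /log2 divff ?gt_eqF //; lra.
- by move: H; rewrite /log2 ln3E mulfK ?gt_eqF //; lra.
- have : 4 <= (m.+4)%:R :> R by rewrite ler_nat.
  by move/log2_ge2; lra.
Qed.


Lemma sumT_nat (F : (bool * bool * bool * bool) * (bool * bool * bool) * (bool * bool) -> nat) :
  (\sum_t F t)%N = sumn (map F sT).
Proof. by rewrite sumnE big_map; apply: goodT. Qed.

Lemma entropic_hv : entropic hv.
Proof.
exists _, _, _, (pp R).
split.
  split.
    by move=> t; rewrite ffunE divr_ge0 // ler0n.
  under eq_bigr => t _ do rewrite ffunE.
  rewrite -mulr_suml -natr_sum sumT_nat.
  have E : sumn (map qf sT) = 768%N by vm_compute.
  by rewrite E divff // pnatr_eq0.
by rewrite /entvec /hv H1 H2 H3 H12 H13 H23 H123.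
Qed.

End Main.

Theorem theorem5 (R : realType) :
  exists h : 'rV[R]_7,
    entropic h /\ in_relint_Omega h /\ ~ in_Omega_in h.
Proof.
exists (hv R); split; [exact: entropic_hv|split; [exact: relint_hv|exact: not_in_hv]].
Qed.
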